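(* Let $A$ be a finite set of positive integers. Then $A$ is relatively prime if and only if there exists an $\mathcal{N}$-set $K \subseteq \mathbb{R}$ such that $A = (K-K)\cap \mathbb{N}$.
   Context: $\mathbb{N}$ denotes the set of positive integers. A set $A$ of integers is relatively prime if $A$ is nonempty and its elements have no common factor greater than $1$ (equivalently, $A$ generates the additive group $\mathbb{Z}$). For $K \subseteq \mathbb{R}^n$, $K-K=\{x-y : x,y\in K\}$. An $\mathcal{N}$-set in $\mathbb{R}^n$ is a compact set $K\subseteq\mathbb{R}^n$ such that for every $x\in\mathbb{R}^n$ there exists $y\in K$ with $x-y\in\mathbb{Z}^n$. *)

(* Defs.v *)
From Stdlib Require Export Reals ZArith Arith List.
Open Scope R_scope.

Definition rel_prime_set (A : list nat) : Prop :=
  A <> nil /\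
  forall d : nat, (1 < d)%nat -> ~ (forall a, In a A -> Nat.divide d a).

Definition N_set (K : R -> Prop) : Prop :=
  compact K /\ forall x : R, exists y : R, K y /\ exists z : Z, x - y = IZR z.

(* Main.v *)
Require Import Defs.
From Stdlib Require Import Reals ZArith Znumtheory Classical Lia Lra List.
Open Scope R_scope.

Lemma divZ_nat (d a : nat) : (0 < d)%nat -> (Z.of_nat d | Z.of_nat a)%Z -> Nat.divide d a.
Proof.
  intros Hd [q Hq].
  assert (0 <= q)%Z by nia.
  exists (Z.to_nat q). apply Nat2Z.inj. rewrite Nat2Z.inj_mul, Z2Nat.id; lia.
Qed.

Lemma divnat_Z (d a : nat) : Nat.divide d a -> (Z.of_nat d | Z.of_nat a)%Z.
Proof. intros [q ->]. exists (Z.of_nat q). lia. Qed.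

Lemma pig (P : nat -> R -> Prop)
  (mono : forall i d d', 0 < d -> d <= d' -> P i d -> P i d') (N : nat) :
  (forall d, 0 < d -> exists i, (i < N)%nat /\ P i d) ->
  exists i, (i < N)%nat /\ forall d, 0 < d -> P i d.
Proof.
  induction N as [|N IH]; intros H.
  - destruct (H 1 Rlt_0_1) as [i [Hi _]]. lia.
  - destruct (classic (forall d, 0 < d -> P N d)) as [HN|HN].
    + exists N; split; [lia|exact HN].
    + apply not_all_ex_not in HN as [d0 Hd0].
      assert (0 < d0 /\ ~ P N d0) as [Hd0p Hd0n].
      { split; apply NNPP; intro C; apply Hd0; intro; tauto. }
      destruct IH as [i [Hi Hp]].
      * intros d Hd.
        destruct (H (Rmin d d0)) as [i [Hi Hp]].
        { apply Rmin_pos; auto. }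
        destruct (Nat.eq_dec i N) as [->|Hne].
        -- exfalso; apply Hd0n. eapply mono; [|apply Rmin_r|exact Hp].
           apply Rmin_pos; auto.
        -- exists i; split; [lia|]. eapply mono; [|apply Rmin_l|exact Hp].
           apply Rmin_pos; auto.
      * exists i; split; [lia|exact Hp].
Qed.

Lemma closed_crit (D : R -> Prop) :
  (forall x, (forall d, 0 < d -> exists y, D y /\ Rabs (x - y) < d) -> D x) ->
  closed_set D.
Proof.
  intros H x Hx. apply NNPP; intro Hn. apply Hx, H. intros d Hd.
  apply NNPP; intro Hno. apply Hn. exists (mkposreal d Hd).
  intros y Hy Dy. apply Hno. exists y; split; auto.
  unfold disc in Hy; simpl in Hy. rewrite Rabs_minus_sym; auto.
Qed.

Lemma closed_use (D : R -> Prop) : closed_set D -> forall x,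
  (forall d, 0 < d -> exists y, D y /\ Rabs (x - y) < d) -> D x.
Proof.
  intros Hc x H. apply NNPP; intro Hx.
  destruct (Hc x Hx) as [del Hdel].
  destruct (H del (cond_pos del)) as [y [Dy Hy]].
  apply (Hdel y); auto. unfold disc. rewrite Rabs_minus_sym; auto.
Qed.

Lemma closed_scaled c N lo hi x : 0 < N ->
  (forall d, 0 < d -> exists y, lo <= (y - c) * N <= hi /\ Rabs (x - y) < d) ->
  lo <= (x - c) * N <= hi.
Proof.
  intros HN H. split; apply Rnot_lt_le; intro Hl.
  - destruct (H ((lo - (x - c) * N) / N)) as [y [[Hy1 Hy2] Hxy]].
    { apply Rdiv_lt_0_compat; lra. }
    apply Rabs_def2 in Hxy as [_ Hxy].
    assert (Hq : (lo - (x - c) * N) / N * N = lo - (x - c) * N) by (field; lra).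
    assert (Hm : (y - x) * N < (lo - (x - c) * N) / N * N)
      by (apply Rmult_lt_compat_r; lra).
    assert (Hid : (y - c) * N = (y - x) * N + (x - c) * N) by ring. lra.
  - destruct (H (((x - c) * N - hi) / N)) as [y [[Hy1 Hy2] Hxy]].
    { apply Rdiv_lt_0_compat; lra. }
    apply Rabs_def2 in Hxy as [Hxy _].
    assert (Hq : ((x - c) * N - hi) / N * N = (x - c) * N - hi) by (field; lra).
    assert (Hm : (x - y) * N < ((x - c) * N - hi) / N * N)
      by (apply Rmult_lt_compat_r; lra).
    assert (Hid : (y - c) * N = (x - c) * N - (x - y) * N) by ring. lra.
Qed.
Lemma closed_sum (K : R -> Prop) (Kc : compact K) (Pm : Z -> Prop) x :
  (forall d, 0 < d -> exists k m, K k /\ Pm m /\ Rabs (x - k - IZR m) < d) ->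
  exists k m, K k /\ Pm m /\ x - k = IZR m.
Proof.
  intros H.
  destruct (compact_P1 _ Kc) as [a [b Hab]].
  set (L := (up (x - b - 1) - 1)%Z).
  assert (HL1 : IZR L <= x - b - 1).
  { unfold L. rewrite minus_IZR. destruct (archimed (x - b - 1)). lra. }
  set (N := Z.to_nat (up (b - a + 3))).
  set (P := fun (i : nat) (d : R) => exists k, K k /\ Pm (L + Z.of_nat i)%Z /\
             Rabs (x - k - IZR (L + Z.of_nat i)) < d).
  destruct (pig P) with (N := N) as [i [Hi Hp]].
  - intros i d d' Hd Hdd [k [Hk [Hm Hl]]]. exists k; repeat split; auto; lra.
  - intros d Hd.
    destruct (H (Rmin d 1)) as [k [m [Hk [Hm Hl]]]]. { apply Rmin_pos; lra. }
    pose proof (Rmin_l d 1). pose proof (Rmin_r d 1).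
    apply Rabs_def2 in Hl as Hl'. destruct Hl' as [Hl1 Hl2].
    destruct (Hab k Hk) as [Hak Hkb].
    assert (Hm1 : (L < m)%Z). { apply lt_IZR. lra. }
    assert (Hm2 : (m - L < up (b - a + 3))%Z).
    { apply lt_IZR. rewrite minus_IZR. destruct (archimed (b - a + 3)).
      unfold L in *. rewrite minus_IZR in *. destruct (archimed (x - b - 1)). lra. }
    exists (Z.to_nat (m - L)). split.
    + unfold N. lia.
    + exists k. replace (L + Z.of_nat (Z.to_nat (m - L)))%Z with m by lia.
      repeat split; auto; lra.
  - set (m := (L + Z.of_nat i)%Z) in *.
    destruct (Hp 1 Rlt_0_1) as [k0 [_ [Hm _]]].
    exists (x - IZR m), m. repeat split; auto; [|ring].
    apply closed_use; [apply compact_P2; auto|].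
    intros d Hd. destruct (Hp d Hd) as [k [Hk [_ Hl]]].
    exists k; split; auto. replace (x - IZR m - k) with (x - k - IZR m) by ring. auto.
Qed.

Lemma not_relprime (A : list nat) (HA : forall a, In a A -> (0 < a)%nat) :
  ~ Defs.rel_prime_set A -> exists d, (1 < d)%nat /\ forall a, In a A -> Nat.divide d a.
Proof.
  intros H. unfold Defs.rel_prime_set in H.
  destruct A as [|a0 A'].
  - exists 2%nat. split; [lia|]. intros a [].
  - apply NNPP. intro C. apply H. split; [discriminate|].
    intros d Hd Hall. apply C. exists d. auto.
Qed.

Lemma dir2 (A : list nat) (HA : forall a, In a A -> (0 < a)%nat) (K : R -> Prop)
  (HK : Defs.N_set K)
  (Hd : forall n : nat, (0 < n)%nat ->
       (In n A <-> exists x y : R, K x /\ K y /\ x - y = INR n)) :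
  Defs.rel_prime_set A.
Proof.
  apply NNPP; intro Hn. apply not_relprime in Hn as [d [Hd1 Hdiv]]; auto.
  destruct HK as [Kc Hcov].
  set (Zd := Z.of_nat d).
  assert (Hk : forall k1 k2, K k1 -> K k2 -> forall m, k1 - k2 = IZR m -> (Zd | m)%Z).
  { assert (Hpos : forall k1 k2, K k1 -> K k2 -> forall m, (0 < m)%Z -> k1 - k2 = IZR m -> (Zd | m)%Z).
    { intros k1 k2 H1 H2 m Hm Heq.
      assert (HIn : In (Z.to_nat m) A).
      { apply Hd; [lia|]. exists k1, k2. repeat split; auto.
        rewrite INR_IZR_INZ, Z2Nat.id; [exact Heq|lia]. }
      pose proof (divnat_Z _ _ (Hdiv _ HIn)). rewrite Z2Nat.id in H; [auto|lia]. }
    intros k1 k2 H1 H2 m Heq.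
    destruct (Z.lt_trichotomy m 0) as [Hm|[Hm|Hm]].
    - apply Z.divide_opp_r. apply (Hpos k2 k1); auto; [lia|].
      rewrite opp_IZR; lra.
    - subst; apply Z.divide_0_r.
    - apply (Hpos k1 k2); auto. }
  destruct (Hcov 0) as [y0 [Hy0 _]].
  set (P0 := fun x => exists k m, K k /\ (Zd | m)%Z /\ x - k = IZR m).
  set (E := fun s => y0 <= s <= y0 + 1 /\ forall u, y0 <= u <= s -> P0 u).
  destruct (completeness E) as [t [Hub Hlub]].
  { exists (y0 + 1). intros s [Hs _]. lra. }
  { exists y0. split; [lra|]. intros u Hu. exists y0, 0%Z.
    repeat split; auto; [apply Z.divide_0_r|]. simpl; lra. }
  assert (HE0 : E y0).
  { split; [lra|]. intros u Hu. exists y0, 0%Z.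
    repeat split; auto; [apply Z.divide_0_r|]. simpl; lra. }
  assert (Ht1 : y0 <= t) by (apply Hub; auto).
  assert (Ht2 : t <= y0 + 1) by (apply Hlub; intros s [Hs _]; lra).
  assert (Happ : forall e, e < t -> exists s, E s /\ e < s).
  { intros e He. apply NNPP; intro C.
    assert (t <= e); [|lra]. apply Hlub. intros s Hs.
    apply Rnot_lt_le. intro. apply C. exists s; auto. }
  assert (HPt : P0 t).
  { destruct (closed_sum K Kc (fun m => (Zd | m)%Z) t) as [k [m [Hk' [Hm Heq]]]].
    - intros e He. destruct (Happ (t - e)) as [s [[Hs1 Hs2] Hs]]; [lra|].
      assert (s <= t) by (apply Hub; split; auto).
      destruct (Hs2 s) as [k [m [Hk' [Hm Heq]]]]; [lra|].
      exists k, m. repeat split; auto.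
      rewrite Rabs_right; lra.
    - exists k, m; auto. }
  assert (Hbelow : forall u, y0 <= u <= t -> P0 u).
  { intros u Hu. destruct (Req_dec u t) as [->|Hne]; auto.
    destruct (Happ u) as [s [[Hs1 Hs2] Hs]]; [lra|]. apply Hs2; lra. }
  assert (Htlt : t < y0 + 1).
  { destruct (Req_dec t (y0 + 1)) as [Heq|]; [|lra]. exfalso.
    destruct HPt as [k [m [Hk' [Hm Hkm]]]].
    assert (Hm1 : (Zd | m - 1)%Z).
    { apply (Hk y0 k); auto. rewrite minus_IZR. simpl. lra. }
    assert (Hone : (Zd | 1)%Z).
    { replace 1%Z with (m - (m - 1))%Z by lia. apply Z.divide_sub_r; auto. }
    apply Z.divide_pos_le in Hone; [|lia]. unfold Zd in Hone. lia. }
  destruct (closed_sum K Kc (fun m => ~ (Zd | m)%Z) t) as [k1 [m1 [Hk1 [Hm1 Heq1]]]].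
  - intros e He.
    pose proof (Rmin_l e (y0 + 1 - t)). pose proof (Rmin_r e (y0 + 1 - t)).
    set (e' := Rmin e (y0 + 1 - t)) in *.
    assert (He' : 0 < e') by (apply Rmin_pos; lra).
    assert (Hu : exists u, t < u < t + e' /\ ~ P0 u).
    { apply NNPP; intro C.
      assert (E (t + e' / 2)).
      { split; [lra|]. intros u Hu.
        destruct (Rle_dec u t); [apply Hbelow; lra|].
        apply NNPP; intro C2. apply C. exists u. split; auto; lra. }
      assert (t + e' / 2 <= t) by (apply Hub; auto). lra. }
    destruct Hu as [u [Hu Hnu]].
    destruct (Hcov u) as [k [Hk' [z Hz]]].
    exists k, z. repeat split; auto.
    + intro Hdz. apply Hnu. exists k, z. auto.
    + replace (t - k - IZR z) with (t - u) by lra. rewrite Rabs_left; lra.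
  - destruct HPt as [k0 [m0 [Hk0 [Hm0 Heq0]]]].
    apply Hm1.
    assert (Hdd : (Zd | m0 - m1)%Z).
    { apply (Hk k1 k0); auto. rewrite minus_IZR. lra. }
    replace m1 with (m0 - (m0 - m1))%Z by lia. apply Z.divide_sub_r; auto.
Qed.

Definition sumZ (l : list Z) : Z := fold_right Z.add 0%Z l.
Definition nn (st : list Z) (j : nat) : Z := sumZ (firstn j st).

Lemma sumZ_app l1 l2 : sumZ (l1 ++ l2) = (sumZ l1 + sumZ l2)%Z.
Proof. induction l1; simpl; [lia|]. unfold sumZ in *; simpl. lia. Qed.

Lemma sumZ_opp l : sumZ (map Z.opp l) = (- sumZ l)%Z.
Proof. induction l; simpl; [lia|]. unfold sumZ in *; simpl. lia. Qed.

Lemma nn_S st l : (l < length st)%nat -> nn st (S l) = (nn st l + nth l st 0)%Z.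
Proof.
  revert l; induction st as [|a st IH]; intros l Hl; simpl in Hl; [lia|].
  destruct l.
  - unfold nn, sumZ; simpl. lia.
  - specialize (IH l ltac:(lia)). unfold nn, sumZ in *; simpl in *. lia.
Qed.

Lemma nn_full st : nn st (length st) = sumZ st.
Proof. unfold nn. rewrite firstn_all. auto. Qed.

Lemma nn_0 st : nn st 0 = 0%Z.
Proof. reflexivity. Qed.

Lemma nn_bound st j : (Z.abs (nn st j) <= sumZ (map Z.abs st))%Z.
Proof.
  assert (Hnn : forall l, (0 <= sumZ (map Z.abs l))%Z).
  { induction l; unfold sumZ in *; simpl; lia. }
  revert j; induction st as [|a st IH]; intros j.
  - destruct j; unfold nn, sumZ; simpl; lia.
  - specialize (Hnn st). destruct j.
    + unfold nn, sumZ in *; simpl. lia.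
    + specialize (IH j). unfold nn, sumZ in *; simpl. lia.
Qed.

Definition Kof (st : list Z) (x : R) : Prop :=
  exists j, (j <= length st)%nat /\
    INR j <= (x - IZR (nn st j)) * INR (S (length st)) <= INR j + 1.

Lemma Kof_compact st : compact (Kof st).
Proof.
  set (Nr := INR (S (length st))).
  assert (HN : 0 < Nr) by (apply lt_0_INR; lia).
  apply compact_carac. split.
  - apply closed_crit. intros x Hx.
    destruct (pig (fun j d => exists y, ((j <= length st)%nat /\
        INR j <= (y - IZR (nn st j)) * Nr <= INR j + 1) /\ Rabs (x - y) < d))
      with (N := S (length st)) as [j [Hj Hp]].
    + intros i d d' Hd Hdd [y [Hy Hl]]. exists y; split; auto; lra.
    + intros d Hd. destruct (Hx d Hd) as [y [[j [Hj Hy]] Hl]].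
      exists j. split; [lia|]. exists y; auto.
    + exists j. split; [lia|]. apply closed_scaled; auto.
      intros d Hd. destruct (Hp d Hd) as [y [[_ Hy] Hl]]. exists y; auto.
  - set (B := IZR (sumZ (map Z.abs st))).
    exists (- B), (B + 1). intros x [j [Hj [H1 H2]]]. fold Nr in H1, H2.
    pose proof (nn_bound st j) as Hb.
    assert (Hb1 : - B <= IZR (nn st j)).
    { unfold B. rewrite <- opp_IZR. apply IZR_le. lia. }
    assert (Hb2 : IZR (nn st j) <= B).
    { unfold B. apply IZR_le. lia. }
    assert (0 <= INR j) by apply pos_INR.
    assert (INR j + 1 <= Nr).
    { unfold Nr. rewrite <- S_INR. apply le_INR. lia. }
    assert (0 <= x - IZR (nn st j)).
    { apply Rnot_lt_le; intro Hc.
      assert ((x - IZR (nn st j)) * Nr < 0) by (apply Rmult_neg_pos; lra). lra. }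
    assert (x - IZR (nn st j) <= 1).
    { apply Rnot_lt_le; intro Hc.
      assert (1 * Nr < (x - IZR (nn st j)) * Nr) by (apply Rmult_lt_compat_r; lra). lra. }
    lra.
Qed.
Lemma Kof_diff st x y n (Hx : Kof st x) (Hy : Kof st y) (Hxy : x - y = IZR n) :
  exists j l w, (j <= length st)%nat /\ (l <= length st)%nat /\
    n = (nn st j - nn st l + w)%Z /\
    ((w = 0 /\ (j = l \/ j = S l \/ l = S j)) \/
     (w = 1 /\ j = length st /\ l = 0%nat) \/
     (w = -1 /\ j = 0%nat /\ l = length st))%Z.
Proof.
  destruct Hx as [j [Hj [Hx1 Hx2]]]. destruct Hy as [l [Hl [Hy1 Hy2]]].
  set (w := (n - nn st j + nn st l)%Z).
  exists j, l, w. split; [auto|]. split; [auto|]. split; [unfold w; lia|].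
  set (N := S (length st)) in *.
  assert (Hw : IZR w = (x - IZR (nn st j)) - (y - IZR (nn st l))).
  { unfold w. rewrite plus_IZR, minus_IZR. lra. }
  assert (Hm : IZR w * INR N = (x - IZR (nn st j)) * INR N - (y - IZR (nn st l)) * INR N).
  { rewrite Hw. ring. }
  assert (Hz1 : (w * Z.of_nat N <= Z.of_nat j - Z.of_nat l + 1)%Z).
  { apply le_IZR. rewrite mult_IZR, plus_IZR, minus_IZR, <- !INR_IZR_INZ. simpl IZR. lra. }
  assert (Hz2 : (Z.of_nat j - Z.of_nat l - 1 <= w * Z.of_nat N)%Z).
  { apply le_IZR. rewrite mult_IZR, !minus_IZR, <- !INR_IZR_INZ. simpl IZR. lra. }
  unfold N in *.
  assert (w <= 1 /\ -1 <= w)%Z as [Hwa Hwb] by nia.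
  assert (w = 0 \/ w = 1 \/ w = -1)%Z as [H0|[H0|H0]] by lia; rewrite H0 in *.
  - left. split; [auto|]. lia.
  - right; left. lia.
  - right; right. lia.
Qed.

Lemma Kof_cover st x : exists y, Kof st y /\ exists z : Z, x - y = IZR z.
Proof.
  set (Nr := INR (S (length st))).
  assert (HN : 0 < Nr) by (apply lt_0_INR; lia).
  set (fl := (up x - 1)%Z).
  set (u := x - IZR fl).
  assert (Hu : 0 <= u < 1).
  { unfold u, fl. rewrite minus_IZR. destruct (archimed x). simpl. lra. }
  set (v := u * Nr).
  assert (Hv : 0 <= v < Nr).
  { unfold v. split; [apply Rmult_le_pos; lra|].
    replace Nr with (1 * Nr) at 2 by ring. apply Rmult_lt_compat_r; lra. }
  set (j0 := (up v - 1)%Z).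
  assert (Hj0 : IZR j0 <= v < IZR j0 + 1).
  { unfold j0. rewrite minus_IZR. destruct (archimed v). simpl. lra. }
  assert (Hj0a : (0 <= j0)%Z) by (apply Z.lt_succ_r, lt_IZR; rewrite succ_IZR; lra).
  assert (Hj0b : (j0 < Z.of_nat (S (length st)))%Z)
    by (apply lt_IZR; rewrite <- INR_IZR_INZ; fold Nr; lra).
  set (j := Z.to_nat j0).
  assert (HjR : INR j = IZR j0) by (unfold j; rewrite INR_IZR_INZ, Z2Nat.id; auto).
  exists (u + IZR (nn st j)). split.
  - exists j. split; [unfold j; lia|].
    replace (u + IZR (nn st j) - IZR (nn st j)) with u by ring. fold Nr. fold v. lra.
  - exists (fl - nn st j)%Z. rewrite minus_IZR. unfold u. ring.
Qed.
Definition steps_ok (A : list nat) (st : list Z) : Prop :=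
  forall s, In s st -> exists a, In a A /\ (s = Z.of_nat a \/ s = - Z.of_nat a)%Z.

Definition Rep (A : list nat) (z : Z) : Prop := exists st, sumZ st = z /\ steps_ok A st.

Lemma Rep_0 A : Rep A 0.
Proof. exists nil. split; [reflexivity|]. intros s []. Qed.

Lemma Rep_add A z1 z2 : Rep A z1 -> Rep A z2 -> Rep A (z1 + z2).
Proof.
  intros [s1 [H1 O1]] [s2 [H2 O2]]. exists (s1 ++ s2). split.
  - rewrite sumZ_app; lia.
  - intros s Hs. apply in_app_or in Hs as [Hs|Hs]; auto.
Qed.

Lemma Rep_opp A z : Rep A z -> Rep A (- z).
Proof.
  intros [s1 [H1 O1]]. exists (map Z.opp s1). split.
  - rewrite sumZ_opp; lia.
  - intros s Hs. apply in_map_iff in Hs as [s' [<- Hs']].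
    destruct (O1 s' Hs') as [a [Ha [E|E]]]; exists a; split; auto; lia.
Qed.

Lemma Rep_a A a : In a A -> Rep A (Z.of_nat a).
Proof.
  intros Ha. exists (Z.of_nat a :: nil). split; [unfold sumZ; simpl; lia|].
  intros s [<-|[]]. exists a; auto.
Qed.

Lemma Rep_mul A z k : Rep A z -> Rep A (k * z).
Proof.
  intros Hz.
  assert (Hn : forall n : nat, Rep A (Z.of_nat n * z)).
  { induction n. - apply Rep_0. - replace (Z.of_nat (S n) * z)%Z with (z + Z.of_nat n * z)%Z by lia.
      apply Rep_add; auto. }
  destruct (Z_le_gt_dec 0 k).
  - replace k with (Z.of_nat (Z.to_nat k)) by lia. auto.
  - replace (k * z)%Z with (- (Z.of_nat (Z.to_nat (- k)) * z))%Z by lia. apply Rep_opp; auto.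
Qed.

Definition gl (L : list nat) : Z := fold_right Z.gcd 0%Z (map Z.of_nat L).

Lemma gl_rep A L : incl L A -> Rep A (gl L).
Proof.
  induction L as [|a L IH]; intros Hi.
  - apply Rep_0.
  - unfold gl; simpl. fold (gl L).
    destruct (Zis_gcd_bezout _ _ _ (Zgcd_is_gcd (Z.of_nat a) (gl L))) as [u v Huv].
    rewrite <- Huv. apply Rep_add; apply Rep_mul.
    + apply Rep_a. apply Hi; left; auto.
    + apply IH. intros y Hy; apply Hi; right; auto.
Qed.

Lemma gl_div L a : In a L -> (gl L | Z.of_nat a)%Z.
Proof.
  induction L as [|b L IH]; intros Ha; [destruct Ha|].
  unfold gl; simpl; fold (gl L). destruct Ha as [<-|Ha].
  - apply Z.gcd_divide_l.
  - eapply Z.divide_trans; [apply Z.gcd_divide_r|]. auto.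
Qed.

Lemma gl_nonneg L : (0 <= gl L)%Z.
Proof. destruct L; unfold gl; simpl; [lia|]. apply Z.gcd_nonneg. Qed.

Lemma exists_steps (A : list nat) (HA : forall a, In a A -> (0 < a)%nat)
  (Hrp : Defs.rel_prime_set A) :
  exists st, sumZ st = (-1)%Z /\ steps_ok A st /\
    (forall a, In a A -> In (Z.of_nat a) st).
Proof.
  destruct Hrp as [Hne Hnd].
  assert (Hg : gl A = 1%Z).
  { destruct A as [|a0 A']; [congruence|].
    pose proof (gl_nonneg (a0 :: A')).
    assert (gl (a0 :: A') <> 0%Z).
    { intro H0. pose proof (gl_div (a0 :: A') a0 (or_introl eq_refl)) as Hd.
      rewrite H0 in Hd. apply Z.divide_0_l in Hd. specialize (HA a0 (or_introl eq_refl)). lia. }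
    destruct (Z.eq_dec (gl (a0 :: A')) 1) as [|Hn1]; auto. exfalso.
    apply (Hnd (Z.to_nat (gl (a0 :: A')))); [lia|].
    intros a Ha. apply divZ_nat; [lia|]. rewrite Z2Nat.id; [|lia]. apply gl_div; auto. }
  destruct (Rep_opp _ _ (gl_rep A A (incl_refl A))) as [st0 [Hs0 Ho0]].
  exists (st0 ++ map Z.of_nat A ++ map Z.opp (map Z.of_nat A)). split; [|split].
  - rewrite !sumZ_app, sumZ_opp. lia.
  - intros s Hs. apply in_app_or in Hs as [Hs|Hs]; auto.
    apply in_app_or in Hs as [Hs|Hs].
    + apply in_map_iff in Hs as [a [<- Ha]]. exists a; auto.
    + apply in_map_iff in Hs as [s' [<- Hs']]. apply in_map_iff in Hs' as [a [<- Ha]].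
      exists a; auto.
  - intros a Ha. apply in_or_app; right. apply in_or_app; left. apply in_map; auto.
Qed.

Theorem theorem1 (A : list nat) (HA : forall a, In a A -> (0 < a)%nat) :
  rel_prime_set A <->
  exists K : R -> Prop,
    N_set K /\
    (forall n : nat, (0 < n)%nat ->
       (In n A <-> exists x y : R, K x /\ K y /\ x - y = INR n)).
Proof.
  split.
  - intros Hrp. destruct (exists_steps A HA Hrp) as [st [Hsum [Hok Hin]]].
    exists (Kof st). split; [split; [apply Kof_compact|apply Kof_cover]|].
    intros n Hn. split.
    + intros HnA. apply Hin in HnA.
      destruct (In_nth _ _ 0%Z HnA) as [l [Hl Hnth]].
      set (N := INR (S (length st))).
      assert (HN : 0 < N) by (apply lt_0_INR; lia).
      exists ((INR l + 1) / N + IZR (nn st (S l))), ((INR l + 1) / N + IZR (nn st l)).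
      split; [|split].
      * exists (S l). split; [lia|]. rewrite S_INR.
        replace ((INR l + 1) / N + IZR (nn st (S l)) - IZR (nn st (S l))) with ((INR l + 1) / N) by ring.
        fold N. replace ((INR l + 1) / N * N) with (INR l + 1) by (field; lra). lra.
      * exists l. split; [lia|].
        replace ((INR l + 1) / N + IZR (nn st l) - IZR (nn st l)) with ((INR l + 1) / N) by ring.
        fold N. replace ((INR l + 1) / N * N) with (INR l + 1) by (field; lra). lra.
      * rewrite nn_S by auto. rewrite plus_IZR, Hnth, <- INR_IZR_INZ. ring.
    + intros [x [y [Hx [Hy Hxy]]]].
      rewrite INR_IZR_INZ in Hxy.
      destruct (Kof_diff st x y _ Hx Hy Hxy) as [j [l [w [Hj [Hl [Hn' Hc]]]]]].
      assert (Hstep : forall i, (i < length st)%nat -> exists a, In a A /\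
                 (nth i st 0 = Z.of_nat a \/ nth i st 0 = - Z.of_nat a)%Z).
      { intros i Hi. apply Hok. apply nth_In; auto. }
      destruct Hc as [ [ -> [ -> | [ -> | -> ] ] ] | [ [ -> [ -> -> ] ] | [ -> [ -> -> ] ] ] ].
      * lia.
      * rewrite nn_S in Hn' by lia. destruct (Hstep l ltac:(lia)) as [a [Ha [E|E]]].
        -- replace n with a by lia. auto.
        -- lia.
      * rewrite nn_S in Hn' by lia. destruct (Hstep j ltac:(lia)) as [a [Ha [E|E]]].
        -- lia.
        -- replace n with a by lia. auto.
      * rewrite nn_full, nn_0 in Hn'. lia.
      * rewrite nn_full, nn_0 in Hn'. lia.
  - intros [K [HK Hd]]. apply (dir2 A HA K HK Hd).
Qed.
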